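(* Let $a>1$ and $b>1$ be irrational numbers, let $a_n=[an]$, $b_n=[bn]$, $a'_n=[a^{-1}n]$ and $b'_n=[b^{-1}n]$. Then for every positive integer $k$ the series $\sum_{n=1}^\infty \left( \frac{a_{n+k}}{a_n}-\frac{b_{n+k}}{b_n} \right)$ converges and \begin{align*} \sum_{n=1}^\infty \left( \frac{a_{n+k}}{a_n}-\frac{b_{n+k}}{b_n} \right)=\;& k\left( \log a -\log b\right) + \sum_{j=1}^{k}\left(\left\{ j\{ a \}\right\} - \left\{ j\{ b \}\right\}\right)\\ &-\sum_{n=1}^{\infty} \frac{ak\{ a^{-1} (n+1) \}-bk\{ b^{-1} (n+1) \}}{n(n+1)}\\ &-\sum_{n=1}^{\infty} \frac{\sum_{j=1}^k\{ \{ a\} (a'_{n+1}+j) \}-\sum_{j=1}^k\{ \{ b\} (b'_{n+1}+j) \}}{n(n+1)}. \end{align*}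
   Context: $[x]$ is the greatest integer not exceeding $x$ and $\{x\}=x-[x]$. *)

(* Defs.v *)
From Stdlib Require Import Reals Lra.
From Coquelicot Require Import Coquelicot.
Open Scope R_scope.

(* [x] : greatest integer not exceeding x (Int_part x = up x - 1 is the floor). *)
Definition flr (x : R) : R := IZR (Int_part x).

Definition frac (x : R) : R := x - flr x.

Definition irrational (x : R) : Prop :=
  forall p q : Z, q <> 0%Z -> x <> IZR p / IZR q.

Fixpoint sum1 (k : nat) (f : nat -> R) : R :=
  match k with
  | O => 0
  | S k' => sum1 k' f + f (S k')
  end.

(* Main.v *)
Require Import Defs.
From Stdlib Require Import Reals Lra Lia ZArith.
From Coquelicot Require Import Coquelicot.
Open Scope R_scope.


Lemma flr_unique (x : R) (z : Z) : IZR z <= x < IZR z + 1 -> flr x = IZR z.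
Proof.
  intros [H1 H2]. unfold flr, Int_part.
  assert (up x = (z + 1)%Z).
  { symmetry. apply tech_up; rewrite plus_IZR; lra. }
  rewrite H. f_equal. lia.
Qed.

Lemma flr_spec (x : R) : flr x <= x < flr x + 1.
Proof. unfold flr. destruct (base_Int_part x). lra. Qed.

Lemma frac_spec (x : R) : 0 <= frac x < 1.
Proof. unfold frac. destruct (flr_spec x). lra. Qed.

Lemma flr_Z (x : R) : exists z, flr x = IZR z.
Proof. unfold flr. eauto. Qed.

Lemma flr_ge (x : R) (z : Z) : IZR z <= x -> IZR z <= flr x.
Proof.
  intros H. unfold flr. destruct (base_Int_part x) as [H1 H2].
  assert (IZR (z - 1) < IZR (Int_part x)) by (rewrite minus_IZR; lra).
  apply lt_IZR in H0. apply IZR_le. lia.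
Qed.

Lemma flr_plus (x : R) (z : Z) : flr (x + IZR z) = flr x + IZR z.
Proof.
  destruct (flr_Z x) as [y Hy]. rewrite Hy. rewrite <- plus_IZR.
  apply flr_unique. rewrite plus_IZR. destruct (flr_spec x). lra.
Qed.

Lemma frac_plus (x : R) (z : Z) : frac (x + IZR z) = frac x.
Proof. unfold frac. rewrite flr_plus. ring. Qed.

Lemma frac_int_mult (c : R) (p : nat) : frac (c * INR p) = frac (frac c * INR p).
Proof.
  destruct (flr_Z c) as [z Hz].
  replace (c * INR p) with (frac c * INR p + IZR (z * Z.of_nat p)).
  - apply frac_plus.
  - rewrite mult_IZR, <- INR_IZR_INZ, <- Hz. unfold frac. ring.
Qed.

Lemma INR_toZ (x : R) : 0 <= x -> INR (Z.to_nat (Int_part x)) = flr x.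
Proof.
  intros H. rewrite INR_IZR_INZ. unfold flr. f_equal. apply Z2Nat.id.
  destruct (base_Int_part x). assert (IZR (-1) < IZR (Int_part x)) by lra.
  apply lt_IZR in H2. lia.
Qed.

Lemma toZ_eq (x : R) (n : nat) : INR n <= x < INR n + 1 -> Z.to_nat (Int_part x) = n.
Proof.
  intros H. assert (flr x = IZR (Z.of_nat n)).
  { apply flr_unique. rewrite <- INR_IZR_INZ. exact H. }
  unfold flr in H0. apply eq_IZR in H0. rewrite H0. apply Nat2Z.id.
Qed.

Lemma inv_lt1 c : 1 < c -> 0 < / c < 1.
Proof. intros. split. apply Rinv_0_lt_compat; lra.
  rewrite <- Rinv_1. apply Rinv_1_lt_contravar; lra. Qed.

Definition An (c : R) (m : nat) : nat := Z.to_nat (Int_part (/ c * INR (S m))).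
Definition Mn (c : R) (N : nat) : nat := Z.to_nat (Int_part (c * INR N)).

Lemma INR_An c m : 0 < c -> INR (An c m) = flr (/ c * INR (S m)).
Proof. intros. unfold An. apply INR_toZ. apply Rmult_le_pos.
  left; apply Rinv_0_lt_compat; lra. apply pos_INR. Qed.

Lemma INR_Mn c N : 0 < c -> INR (Mn c N) = flr (c * INR N).
Proof. intros. unfold Mn. apply INR_toZ. apply Rmult_le_pos. lra. apply pos_INR. Qed.

Lemma An_0 c : 1 < c -> An c 0 = 0%nat.
Proof.
  intros. unfold An. apply toZ_eq. simpl. rewrite Rmult_1_r.
  pose proof (inv_lt1 c H). lra.
Qed.

Lemma An_Mn c N : 1 < c -> An c (Mn c N) = N.
Proof.
  intros Hc. unfold An. apply toZ_eq. rewrite S_INR, INR_Mn by lra.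
  destruct (flr_spec (c * INR N)).
  pose proof (inv_lt1 c Hc).
  assert (/ c * (flr (c * INR N) + 1) <= / c * (c * INR N) + /c) by nra.
  assert (/ c * (c * INR N) < / c * (flr (c * INR N) + 1)) by nra.
  replace (/ c * (c * INR N)) with (INR N) in * by (field; lra).
  lra.
Qed.

Lemma Mn_ge c N : 1 < c -> (N <= Mn c N)%nat.
Proof.
  intros Hc. apply INR_le. rewrite INR_Mn by lra. rewrite INR_IZR_INZ.
  apply flr_ge. rewrite <- INR_IZR_INZ. pose proof (pos_INR N). nra.
Qed.

Lemma irr_ne c (n m : nat) : irrational c -> (0 < n)%nat -> c * INR n <> INR m.
Proof.
  intros Hi Hn E. apply (Hi (Z.of_nat m) (Z.of_nat n)). lia.
  rewrite <- !INR_IZR_INZ. rewrite <- E. field. apply not_0_INR; lia.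
Qed.

Lemma An_step c M : 1 < c -> irrational c ->
  An c (S M) = An c M \/
  (An c (S M) = S (An c M) /\ flr (c * INR (S (An c M))) = INR (S M)).
Proof.
  intros Hc Hi.
  pose proof (inv_lt1 c Hc).
  pose proof (INR_An c M ltac:(lra)) as HA.
  destruct (flr_spec (/ c * INR (S M))) as [H1 H2].
  rewrite <- HA in H1, H2.
  assert (Ey : / c * INR (S (S M)) = / c * INR (S M) + / c) by (rewrite (S_INR (S M)); ring).
  destruct (Rlt_le_dec (/ c * INR (S (S M))) (INR (An c M) + 1)) as [Hl|Hl].
  - left. unfold An at 1. apply toZ_eq. lra.
  - right. split.
    + unfold An at 1. apply toZ_eq. rewrite S_INR. lra.
    + rewrite (INR_IZR_INZ (S M)). apply flr_unique. rewrite <- INR_IZR_INZ.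
      rewrite Ey in Hl.
      assert (A1 : INR (S M) < c * INR (S (An c M))).
      { rewrite (S_INR (An c M)). replace (INR (S M)) with (c * (/ c * INR (S M))) by (field; lra).
        apply Rmult_lt_compat_l; lra. }
      assert (A2 : c * INR (S (An c M)) <= INR (S (S M))).
      { rewrite (S_INR (An c M)). replace (INR (S (S M))) with (c * (/ c * INR (S (S M)))) by (field; lra).
        apply Rmult_le_compat_l; lra. }
      pose proof (irr_ne c (S (An c M)) (S (S M)) Hi ltac:(lia)).
      rewrite (S_INR (S M)) in *. rewrite (S_INR M) in *. lra.
Qed.

Definition Sf (c : R) (k m : nat) : R :=
  sum1 k (fun j => frac (frac c * (INR (An c m) + INR j))).
Definition tt (c : R) (k n : nat) : R := flr (c * INR (n + k)) / flr (c * INR n) - 1.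
Definition vc (c : R) (k m : nat) : R :=
  c * INR k * frac (/ c * (INR m + 1)) / (INR m * (INR m + 1)).
Definition wc (c : R) (k m : nat) : R := Sf c k m / (INR m * (INR m + 1)).
Definition Hs (p : nat) : R := sum1 p (fun m => / INR m).
Definition RHS (c : R) (k M : nat) : R :=
  c * INR k * INR (An c M) / INR M + INR k * Hs (M - 1) - sum1 (M - 1) (vc c k)
  + Sf c k 0 - sum1 M (wc c k) - Sf c k M / (INR M + 1).

Lemma tele (g : R -> R) (x : R) (k : nat) :
  sum1 k (fun j => g (x + 1 + INR j)) - sum1 k (fun j => g (x + INR j))
  = g (x + 1 + INR k) - g (x + 1).
Proof.
  induction k as [|k IH]; cbn [sum1].
  - simpl INR. rewrite Rplus_0_r. ring.
  - replace (x + INR (S k)) with (x + 1 + INR k) by (rewrite S_INR; ring). lra.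
Qed.

Lemma RHS_0 c k : 1 < c -> RHS c k 0 = 0.
Proof.
  intros Hc. unfold RHS. rewrite An_0 by lra. simpl. unfold Hs, Rdiv. cbn [sum1]. rewrite Rplus_0_l, Rinv_1. ring.
Qed.

Lemma RHS_diff c k M : 1 < c ->
  RHS c k (S M) - RHS c k M =
  (c * INR k * (INR (An c (S M)) - INR (An c M)) - (Sf c k (S M) - Sf c k M)) / (INR M + 1).
Proof.
  intros Hc. destruct M as [|p].
  - unfold RHS. rewrite !An_0 by lra. cbn [sum1]. simpl (_ - _)%nat. unfold wc.
    simpl INR. cbn [sum1]. unfold Hs. cbn [sum1]. replace (c * INR k * 0 / 0) with 0 by (unfold Rdiv; ring). field.
  - unfold RHS. replace (S (S p) - 1)%nat with (S p) by lia.
    replace (S p - 1)%nat with p by lia.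
    unfold Hs. cbn [sum1].
    remember (sum1 p (vc c k)) as VV. remember (sum1 p (wc c k)) as WW. remember (sum1 p (fun m => / INR m)) as Hh.
    unfold vc, wc.
    pose proof (INR_An c (S p) ltac:(lra)) as HA.
    rewrite (S_INR (S p)) in HA.
    assert (Hf : frac (/ c * (INR (S p) + 1)) = / c * (INR (S p) + 1) - INR (An c (S p))).
    { unfold frac. rewrite HA. ring. }
    rewrite Hf.
    assert (0 < INR (S p)) by (apply lt_0_INR; lia).
    rewrite (S_INR (S p)). field. lra.
Qed.

Lemma RHS_sum c k M : 1 < c -> irrational c ->
  RHS c k M = sum1 (An c M) (tt c k).
Proof.
  intros Hc Hi. induction M as [|M IH].
  - rewrite RHS_0, An_0 by lra. reflexivity.
  - pose proof (RHS_diff c k M Hc) as D.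
    destruct (An_step c M Hc Hi) as [E|[E F]].
    + assert (Sf c k (S M) = Sf c k M) by (unfold Sf; rewrite E; reflexivity).
      rewrite E, H, Rminus_diag, Rminus_diag, Rmult_0_r, Rminus_0_r in D.
      rewrite E, <- IH. unfold Rdiv in D. rewrite Rmult_0_l in D. lra.
    + rewrite E. cbn [sum1]. rewrite <- IH.
      assert (Sf c k (S M) - Sf c k M =
        frac (frac c * (INR (An c M) + 1 + INR k)) - frac (frac c * (INR (An c M) + 1))).
      { unfold Sf. rewrite E, S_INR. apply (tele (fun y => frac (frac c * y))). }
      rewrite H, E, S_INR in D.
      unfold tt. rewrite F.
      rewrite (frac_int_mult c (S (An c M) + k)) at 1 || idtac.
      assert (G1 : flr (c * INR (S (An c M) + k)) =
         c * (INR (An c M) + 1 + INR k) - frac (frac c * (INR (An c M) + 1 + INR k))).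
      { rewrite <- (S_INR (An c M)), <- plus_INR, <- frac_int_mult. unfold frac. ring. }
      assert (G2 : INR (S M) =
         c * (INR (An c M) + 1) - frac (frac c * (INR (An c M) + 1))).
      { rewrite <- F, <- (S_INR (An c M)), <- frac_int_mult. unfold frac. ring. }
      assert (0 < INR M + 1) by (pose proof (pos_INR M); lra).
      assert (D2 : RHS c k (S M) = RHS c k M + (c * INR k * (INR (An c M) + 1 - INR (An c M)) -
        (frac (frac c * (INR (An c M) + 1 + INR k)) - frac (frac c * (INR (An c M) + 1)))) /
       (INR M + 1)) by lra.
      rewrite D2. rewrite G1, (S_INR M).
      rewrite (S_INR M) in G2.
      apply Rplus_eq_compat_l. field_simplify; try lra. f_equal. lra.
Qed.

Lemma lim_inv_S : is_lim_seq (fun N => / INR (S N)) 0.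
Proof.
  apply (is_lim_seq_incr_1 (fun N => / INR N)).
  replace (Finite 0) with (Rbar_inv p_infty) by reflexivity.
  apply is_lim_seq_inv. apply is_lim_seq_INR. discriminate.
Qed.

Lemma lim_bnd (x : nat -> R) (l C : R) :
  (forall N, Rabs (x N - l) <= C / INR (S N)) -> is_lim_seq x l.
Proof.
  intros H.
  assert (L1 : is_lim_seq (fun N => l - C * / INR (S N)) l).
  { replace (Finite l) with (Finite (l - C * 0)) by (f_equal; ring).
    apply is_lim_seq_minus'. apply is_lim_seq_const.
    pose proof (is_lim_seq_scal_l _ C _ lim_inv_S) as Hs; simpl in Hs; exact Hs. }
  assert (L2 : is_lim_seq (fun N => l + C * / INR (S N)) l).
  { replace (Finite l) with (Finite (l + C * 0)) by (f_equal; ring).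
    apply is_lim_seq_plus'. apply is_lim_seq_const.
    pose proof (is_lim_seq_scal_l _ C _ lim_inv_S) as Hs; simpl in Hs; exact Hs. }
  refine (is_lim_seq_le_le _ _ _ l _ L1 L2).
  intros n. specialize (H n). unfold Rdiv in H. apply Rabs_le_between in H. lra.
Qed.

Lemma ln_bounds (X Y : R) : 0 < X <= Y -> (Y - X) / Y <= ln Y - ln X <= (Y - X) / X.
Proof.
  intros [HX HXY].
  assert (HY : 0 < Y) by lra.
  assert (K : forall z, 0 < z -> ln z <= z - 1).
  { intros z Hz. pose proof (exp_ineq1_le (ln z)). rewrite exp_ln in H by lra. lra. }
  split.
  - pose proof (K (X / Y) ltac:(apply Rdiv_lt_0_compat; lra)).
    rewrite ln_div in H by lra.
    replace ((Y - X) / Y) with (- (X / Y - 1)) by (field; lra). lra.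
  - pose proof (K (Y / X) ltac:(apply Rdiv_lt_0_compat; lra)).
    rewrite ln_div in H by lra.
    replace ((Y - X) / X) with (Y / X - 1) by (field; lra). lra.
Qed.

Definition Dg (p : nat) : R := Hs p - ln (INR p).

Lemma Dg_step (n : nat) : (1 <= n)%nat ->
  0 <= Dg n - Dg (S n) <= / INR n - / INR (S n).
Proof.
  intros Hn. unfold Dg, Hs. cbn [sum1].
  assert (0 < INR n) by (apply lt_0_INR; lia).
  pose proof (ln_bounds (INR n) (INR (S n)) ltac:(rewrite S_INR; lra)).
  replace (INR (S n) - INR n) with 1 in H0 by (rewrite S_INR; ring).
  unfold Rdiv in H0. rewrite !Rmult_1_l in H0. lra.
Qed.

Lemma Dg_mono (q d : nat) : (1 <= q)%nat ->
  0 <= Dg q - Dg (q + d) <= / INR q - / INR (q + d).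
Proof.
  intros Hq. induction d as [|d IH].
  - rewrite Nat.add_0_r. lra.
  - pose proof (Dg_step (q + d) ltac:(lia)).
    replace (q + S d)%nat with (S (q + d)) by lia. lra.
Qed.

Lemma Dg_bound (p q : nat) : (1 <= p)%nat -> (1 <= q)%nat ->
  Rabs (Dg p - Dg q) <= / INR p + / INR q.
Proof.
  intros Hp Hq.
  assert (0 < / INR p) by (apply Rinv_0_lt_compat, lt_0_INR; lia).
  assert (0 < / INR q) by (apply Rinv_0_lt_compat, lt_0_INR; lia).
  destruct (Nat.le_ge_cases q p) as [E|E].
  - destruct (Dg_mono q (p - q) Hq). replace (q + (p - q))%nat with p in * by lia.
    assert (0 < / INR p) by (apply Rinv_0_lt_compat, lt_0_INR; lia).
    apply Rabs_le. lra.
  - destruct (Dg_mono p (q - p) Hp). replace (p + (q - p))%nat with q in * by lia.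
    apply Rabs_le. lra.
Qed.

Lemma sum_n_sum1 (f : nat -> R) (p : nat) :
  sum_n (fun n => f (S n)) p = sum1 (S p) f.
Proof.
  induction p as [|p IH].
  - rewrite sum_O. simpl. ring.
  - rewrite sum_Sn, IH. reflexivity.
Qed.

Lemma series_sum1 (f : nat -> R) :
  ex_series (fun n => f (S n)) -> is_lim_seq (fun p => sum1 p f) (Series (fun n => f (S n))).
Proof.
  intros H. apply Series_correct in H.
  apply is_lim_seq_incr_1.
  apply (is_lim_seq_ext (sum_n (fun n => f (S n)))). intros; apply sum_n_sum1.
  exact H.
Qed.

Lemma sub_lim (f : nat -> R) (L : R) (phi : nat -> nat) :
  is_lim_seq (fun p => sum1 p f) L -> (forall N, (N <= phi N)%nat) ->
  is_lim_seq (fun N => sum1 (phi N) f) L.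
Proof.
  intros H Hphi.
  apply (is_lim_seq_subseq (fun p => sum1 p f) L phi); [|exact H].
  intros P [N HN]. exists N. intros n Hn. apply HN. specialize (Hphi n). lia.
Qed.

Lemma ser_bnd (f : nat -> R) (C : R) : 0 <= C ->
  (forall m, (1 <= m)%nat -> Rabs (f m) <= C / (INR m * (INR m + 1))) ->
  ex_series (fun n => f (S n)).
Proof.
  intros HC H.
  apply (@ex_series_le R_AbsRing R_CompleteNormedModule _ (fun n => C / (INR (S n) * (INR (S n) + 1)))).
  - intros n. apply H. lia.
  - exists C.
    assert (E : forall N, sum_n (fun n => C / (INR (S n) * (INR (S n) + 1))) N = C - C / INR (S (S N))).
    { induction N as [|N IH].
      - rewrite sum_O. simpl. field.
      - rewrite sum_Sn, IH. change plus with Rplus. 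
        rewrite (S_INR (S (S N))), (S_INR (S N)), (S_INR N).
        pose proof (pos_INR N). match goal with |- ?A = ?B => change (@eq R A B) end. field. lra. }
    change (is_lim_seq (sum_n (fun n => C / (INR (S n) * (INR (S n) + 1)))) C).
    apply (is_lim_seq_ext (fun N => C - C / INR (S (S N)))). intros; symmetry; apply E.
    apply (lim_bnd _ _ C). intros N.
    replace (C - C / INR (S (S N)) - C) with (- (C / INR (S (S N)))) by ring.
    rewrite Rabs_Ropp. rewrite Rabs_pos_eq.
    + unfold Rdiv. apply Rmult_le_compat_l; [lra|]. apply Rinv_le_contravar.
      apply lt_0_INR; lia. apply le_INR; lia.
    + unfold Rdiv. apply Rmult_le_pos; [lra|]. left. apply Rinv_0_lt_compat, lt_0_INR; lia.
Qed.

Lemma div_le2 (P Q X n : R) : 0 <= P <= Q -> 0 < n <= X -> P / X <= Q / n.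
Proof.
  intros [H1 H2] [H3 H4]. unfold Rdiv.
  apply Rmult_le_compat; try lra.
  left; apply Rinv_0_lt_compat; lra.
  apply Rinv_le_contravar; lra.
Qed.

Lemma Mfacts c N : 1 < c ->
  (S N <= Mn c (S N))%nat /\ c * INR (S N) - 1 < INR (Mn c (S N)) <= c * INR (S N).
Proof.
  intros Hc. split. apply Mn_ge; lra.
  rewrite INR_Mn by lra. destruct (flr_spec (c * INR (S N))). lra.
Qed.

Lemma eq_c c k N : 1 < c -> irrational c ->
  sum1 (S N) (tt c k) =
  c * INR k * INR (S N) / INR (Mn c (S N)) + INR k * Hs (Mn c (S N))
  - INR k * / INR (Mn c (S N)) - sum1 (Mn c (S N) - 1) (vc c k) + Sf c k 0
  - sum1 (Mn c (S N)) (wc c k) - Sf c k (Mn c (S N)) / (INR (Mn c (S N)) + 1).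
Proof.
  intros Hc Hi.
  transitivity (sum1 (An c (Mn c (S N))) (tt c k)). rewrite An_Mn by lra; reflexivity.
  rewrite <- RHS_sum by assumption. unfold RHS. rewrite An_Mn by lra.
  destruct (Mfacts c N Hc) as [HM _].
  destruct (Mn c (S N)) as [|p]. lia.
  replace (S p - 1)%nat with p by lia. unfold Hs. cbn [sum1]. ring.
Qed.

Lemma lim_P1 c k : 1 < c ->
  is_lim_seq (fun N => c * INR k * INR (S N) / INR (Mn c (S N))) (INR k).
Proof.
  intros Hc. apply (lim_bnd _ _ (INR k)). intros N.
  destruct (Mfacts c N Hc) as [HM [H1 H2]].
  apply le_INR in HM.
  assert (0 < INR (S N)) by (apply lt_0_INR; lia).
  pose proof (pos_INR k).
  replace (c * INR k * INR (S N) / INR (Mn c (S N)) - INR k)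
    with (INR k * (c * INR (S N) - INR (Mn c (S N))) / INR (Mn c (S N))) by (field; lra).
  rewrite Rabs_pos_eq.
  - apply div_le2; [split|lra]; nra.
  - unfold Rdiv. apply Rmult_le_pos. nra. left; apply Rinv_0_lt_compat; lra.
Qed.

Lemma lim_invM c k : 1 < c -> is_lim_seq (fun N => INR k * / INR (Mn c (S N))) 0.
Proof.
  intros Hc. apply (lim_bnd _ _ (INR k)). intros N.
  destruct (Mfacts c N Hc) as [HM [H1 H2]].
  apply le_INR in HM.
  assert (0 < INR (S N)) by (apply lt_0_INR; lia).
  pose proof (pos_INR k).
  rewrite Rminus_0_r, Rabs_pos_eq.
  - apply (div_le2 (INR k) (INR k)); lra.
  - apply Rmult_le_pos. lra. left; apply Rinv_0_lt_compat; lra.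
Qed.

Lemma Sf_bnd c k m : 0 <= Sf c k m <= INR k.
Proof.
  unfold Sf. induction k as [|k IH]; cbn [sum1].
  - simpl; lra.
  - destruct (frac_spec (frac c * (INR (An c m) + INR (S k)))). rewrite (S_INR k) at 3. lra.
Qed.

Lemma lim_E c k : 1 < c -> is_lim_seq (fun N => Sf c k (Mn c (S N)) / (INR (Mn c (S N)) + 1)) 0.
Proof.
  intros Hc. apply (lim_bnd _ _ (INR k)). intros N.
  destruct (Mfacts c N Hc) as [HM [H1 H2]].
  apply le_INR in HM.
  assert (0 < INR (S N)) by (apply lt_0_INR; lia).
  pose proof (Sf_bnd c k (Mn c (S N))).
  rewrite Rminus_0_r, Rabs_pos_eq.
  - apply div_le2; lra.
  - unfold Rdiv. apply Rmult_le_pos. lra. left; apply Rinv_0_lt_compat; lra.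
Qed.

Lemma lnM c N : 1 < c ->
  Rabs (ln (INR (Mn c (S N))) - ln (c * INR (S N))) <= / INR (S N).
Proof.
  intros Hc. destruct (Mfacts c N Hc) as [HM [H1 H2]].
  apply le_INR in HM.
  assert (0 < INR (S N)) by (apply lt_0_INR; lia).
  destruct (ln_bounds (INR (Mn c (S N))) (c * INR (S N)) ltac:(lra)) as [L1 L2].
  rewrite Rabs_minus_sym. rewrite Rabs_pos_eq.
  - eapply Rle_trans. exact L2. replace (/ INR (S N)) with (1 / INR (S N)) by (field; lra).
    apply div_le2; lra.
  - eapply Rle_trans; [|exact L1]. apply Rmult_le_pos. lra.
    left; apply Rinv_0_lt_compat; lra.
Qed.

Lemma lim_X a b : 1 < a -> 1 < b ->
  is_lim_seq (fun N => Hs (Mn a (S N)) - Hs (Mn b (S N))) (ln a - ln b).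
Proof.
  intros Ha Hb. apply (lim_bnd _ _ 4). intros N.
  destruct (Mfacts a N Ha) as [HMa _]. destruct (Mfacts b N Hb) as [HMb _].
  assert (0 < INR (S N)) by (apply lt_0_INR; lia).
  pose proof (Dg_bound (Mn a (S N)) (Mn b (S N)) ltac:(lia) ltac:(lia)) as D.
  pose proof (lnM a N Ha). pose proof (lnM b N Hb).
  assert (E : ln (a * INR (S N)) - ln (b * INR (S N)) = ln a - ln b).
  { rewrite !ln_mult by lra. ring. }
  assert (/ INR (Mn a (S N)) <= / INR (S N)) by (apply Rinv_le_contravar; [lra|apply le_INR; lia]).
  assert (/ INR (Mn b (S N)) <= / INR (S N)) by (apply Rinv_le_contravar; [lra|apply le_INR; lia]).
  unfold Dg in D.
  replace (4 / INR (S N)) with (4 * / INR (S N)) by reflexivity.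
  apply Rabs_le_between in D. apply Rabs_le_between in H0. apply Rabs_le_between in H1.
  apply Rabs_le. lra.
Qed.

Definition c_P1 (c : R) (k N : nat) := c * INR k * INR (S N) / INR (Mn c (S N)).

Lemma sum1_minus (f g : nat -> R) p : sum1 p (fun n => f n - g n) = sum1 p f - sum1 p g.
Proof. induction p; cbn [sum1]; [ring|rewrite IHp; ring]. Qed.

Lemma sum1_ext (f g : nat -> R) p : (forall n, f n = g n) -> sum1 p f = sum1 p g.
Proof. intros H; induction p; cbn [sum1]; [reflexivity|rewrite IHp, H; reflexivity]. Qed.

Lemma ser_diff (x f g : nat -> R) (Lf Lg : R) :
  (forall n, x n = f (S n) - g (S n)) ->
  is_lim_seq (fun p => sum1 p f) Lf -> is_lim_seq (fun p => sum1 p g) Lg ->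
  is_lim_seq (sum_n x) (Lf - Lg).
Proof.
  intros Hx Hf Hg.
  apply (is_lim_seq_ext (fun N => sum1 (S N) f - sum1 (S N) g)).
  - intros N. rewrite <- sum1_minus, <- (sum_n_sum1 (fun n => f n - g n)).
    apply sum_n_ext. intros; symmetry; apply Hx.
  - apply is_lim_seq_minus'.
    apply (is_lim_seq_incr_1 (fun p => sum1 p f)); exact Hf.
    apply (is_lim_seq_incr_1 (fun p => sum1 p g)); exact Hg.
Qed.

Lemma ex_vc c k : 1 < c -> ex_series (fun n => vc c k (S n)).
Proof.
  intros Hc. apply (ser_bnd _ (c * INR k)).
  pose proof (pos_INR k); nra.
  intros m Hm. unfold vc.
  assert (0 < INR m) by (apply lt_0_INR; lia).
  pose proof (pos_INR k). destruct (frac_spec (/ c * (INR m + 1))).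
  assert (0 < INR m * (INR m + 1)) by nra.
  assert (0 <= c * INR k) by nra.
  assert (0 <= c * INR k * frac (/ c * (INR m + 1)) <= c * INR k).
  { split. apply Rmult_le_pos; lra.
    rewrite <- (Rmult_1_r (c * INR k)) at 2. apply Rmult_le_compat_l; lra. }
  rewrite Rabs_pos_eq.
  - apply div_le2; lra.
  - unfold Rdiv. apply Rmult_le_pos. lra. left; apply Rinv_0_lt_compat; lra.
Qed.

Lemma ex_wc c k : ex_series (fun n => wc c k (S n)).
Proof.
  apply (ser_bnd _ (INR k)). apply pos_INR.
  intros m Hm. unfold wc.
  assert (0 < INR m) by (apply lt_0_INR; lia).
  pose proof (Sf_bnd c k m).
  assert (0 < INR m * (INR m + 1)) by nra.
  rewrite Rabs_pos_eq.
  - apply div_le2; lra.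
  - unfold Rdiv. apply Rmult_le_pos. lra. left; apply Rinv_0_lt_compat; lra.
Qed.

Theorem theorem3 (a b : R) (k : nat) :
  1 < a -> 1 < b -> irrational a -> irrational b -> (0 < k)%nat ->
  let s := fun c (n : nat) => flr (c * INR n) in
  let s' := fun c (n : nat) => flr (/ c * INR n) in
  let u := fun n : nat =>
    s a (n + 1 + k)%nat / s a (n + 1)%nat - s b (n + 1 + k)%nat / s b (n + 1)%nat in
  let v := fun n : nat =>
    (a * INR k * frac (/ a * (INR (n + 1) + 1))
     - b * INR k * frac (/ b * (INR (n + 1) + 1)))
    / (INR (n + 1) * (INR (n + 1) + 1)) in
  let w := fun n : nat =>
    (sum1 k (fun j => frac (frac a * (s' a (n + 2)%nat + INR j)))
     - sum1 k (fun j => frac (frac b * (s' b (n + 2)%nat + INR j))))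
    / (INR (n + 1) * (INR (n + 1) + 1)) in
  ex_series u /\ ex_series v /\ ex_series w /\
  Series u =
    INR k * (ln a - ln b)
    + sum1 k (fun j => frac (INR j * frac a) - frac (INR j * frac b))
    - Series v - Series w.
Proof.
  intros Ha Hb Hia Hib Hk s s' u v w.
  pose proof (series_sum1 _ (ex_vc a k Ha)) as LVa.
  pose proof (series_sum1 _ (ex_vc b k Hb)) as LVb.
  pose proof (series_sum1 _ (ex_wc a k)) as LWa.
  pose proof (series_sum1 _ (ex_wc b k)) as LWb.
  set (Va := Series (fun n => vc a k (S n))) in *.
  set (Vb := Series (fun n => vc b k (S n))) in *.
  set (Wa := Series (fun n => wc a k (S n))) in *.
  set (Wb := Series (fun n => wc b k (S n))) in *.
  assert (Hv : is_series v (Va - Vb)).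
  { apply (ser_diff v (vc a k) (vc b k)); auto.
    intros n. unfold v, vc. rewrite Nat.add_1_r. unfold Rdiv. ring. }
  assert (Hw : is_series w (Wa - Wb)).
  { apply (ser_diff w (wc a k) (wc b k)); auto.
    intros n. unfold w, s', wc, Sf. rewrite !INR_An by lra.
    replace (n + 2)%nat with (S (S n)) by lia. rewrite Nat.add_1_r. unfold Rdiv. ring. }
  set (S0 := Sf a k 0 - Sf b k 0).
  set (L := (INR k - INR k) + INR k * (ln a - ln b) - (0 - 0) - (Va - Vb) + S0
            - (Wa - Wb) - (0 - 0)).
  assert (Hu : is_series u L).
  { change (is_lim_seq (sum_n u) L).
    assert (PhA : forall N, (N <= Mn a (S N) - 1)%nat) by (intros N; destruct (Mfacts a N Ha); lia).
    assert (PhB : forall N, (N <= Mn b (S N) - 1)%nat) by (intros N; destruct (Mfacts b N Hb); lia).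
    assert (PhA' : forall N, (N <= Mn a (S N))%nat) by (intros N; destruct (Mfacts a N Ha); lia).
    assert (PhB' : forall N, (N <= Mn b (S N))%nat) by (intros N; destruct (Mfacts b N Hb); lia).
    pose proof (is_lim_seq_scal_l _ (INR k) _ (lim_X a b Ha Hb)) as LX. simpl in LX.
    apply (is_lim_seq_ext (fun N =>
      (c_P1 a k N - c_P1 b k N) + INR k * (Hs (Mn a (S N)) - Hs (Mn b (S N)))
      - (INR k * / INR (Mn a (S N)) - INR k * / INR (Mn b (S N)))
      - (sum1 (Mn a (S N) - 1) (vc a k) - sum1 (Mn b (S N) - 1) (vc b k)) + S0
      - (sum1 (Mn a (S N)) (wc a k) - sum1 (Mn b (S N)) (wc b k))
      - (Sf a k (Mn a (S N)) / (INR (Mn a (S N)) + 1) - Sf b k (Mn b (S N)) / (INR (Mn b (S N)) + 1)))).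
    - intros N. unfold c_P1.
      rewrite (sum_n_ext _ (fun n => tt a k (S n) - tt b k (S n))).
      2: { intros n. match goal with |- ?A = ?B => change (@eq R A B) end. unfold u, s, tt. rewrite Nat.add_1_r. ring. }
      rewrite (sum_n_sum1 (fun n => tt a k n - tt b k n)), sum1_minus.
      rewrite (eq_c a k N Ha Hia), (eq_c b k N Hb Hib). unfold S0. ring.
    - unfold L. repeat apply is_lim_seq_minus' || apply is_lim_seq_plus'.
      all: try apply is_lim_seq_const.
      all: try (apply lim_P1; assumption).
      all: try (unfold c_P1; apply lim_P1; assumption).
      all: try (apply lim_invM; assumption).
      all: try (apply lim_E; assumption).
      all: try (apply sub_lim; assumption).
      exact LX. }
  split; [exists L; exact Hu|].
  split; [exists (Va - Vb); exact Hv|].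
  split; [exists (Wa - Wb); exact Hw|].
  rewrite (is_series_unique _ _ Hu), (is_series_unique _ _ Hv), (is_series_unique _ _ Hw).
  assert (E0 : sum1 k (fun j => frac (INR j * frac a) - frac (INR j * frac b)) = S0).
  { unfold S0, Sf. rewrite sum1_minus, !An_0 by lra.
    f_equal; apply sum1_ext; intros j; simpl INR; rewrite Rplus_0_l, Rmult_comm; reflexivity. }
  rewrite E0. unfold L. ring.
Qed.
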